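(* Let $G$ be a stitched 2-ichromatic ordered graph whose two parts (in its interval 2-coloring) have sizes $m$ and $n$. Then $R(G) \geq 4r+1$, where $r = \min(m,n)-1$.
   Context: An ordered graph is a graph together with a specified linear ordering of its vertex set. An ordered graph $G$ is contained in an ordered graph $H$ (a copy of $G$ in $H$) if there is an order-preserving injection $V(G)\to V(H)$ mapping edges to edges. An interval coloring of an ordered graph is a partition of its vertex set into independent sets each consisting of consecutive vertices (these sets are called parts); the interval chromatic number is the minimum number of parts in an interval coloring, and an ordered graph is $k$-ichromatic if its interval chromatic number is $k$. A $k$-ichromatic ordered graph is stitched if, for some interval coloring with $k$ parts, the set of size $2k$ consisting of the first and last vertex of each part lies in a single connected component of the graph (for stitched 2-ichromatic graphs the interval 2-coloring is unique). For $t\ge 1$, the $t$-color Ramsey number $R_t(G)$ of an ordered graph $G$ is the minimum $N$ such that every coloring of the edges of the ordered complete graph on $N$ vertices with $t$ colors contains a monochromatic copy of $G$ (as an ordered subgraph); $R(G)=R_2(G)$. *)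

(* Defs.v *)
From mathcomp Require Import all_boot.
Set Implicit Arguments. Unset Strict Implicit. Unset Printing Implicit Defensive.

(* An ordered graph on N vertices: vertex set 'I_N with its natural linear
   order; edges given by a symmetric irreflexive relation e (hypotheses are
   taken in the theorem). *)

Definition interval_2col (N : nat) (e : rel 'I_N) (k : nat) : Prop :=
  0 < k < N /\ forall u v : 'I_N, e u v -> (val u < k) = (val v < k) -> False.

Definition interval_1col (N : nat) (e : rel 'I_N) : Prop :=
  0 < N /\ forall u v : 'I_N, e u v -> False.

Definition ichromatic2 (N : nat) (e : rel 'I_N) : Prop :=
  (exists k, interval_2col e k) /\ ~ interval_1col e.

(* Stitched (2-ichromatic case): for some interval 2-coloring with parts
   [0,k), [k,N), the first and last vertices of each part, i.e. 0, k-1, k,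
   N-1, lie in a single connected component. *)
Definition stitched2 (N : nat) (e : rel 'I_N) : Prop :=
  exists k, interval_2col e k /\
    forall u v : 'I_N,
      val u \in [:: 0; k.-1; k; N.-1] -> val v \in [:: 0; k.-1; k; N.-1] ->
      connect e u v.

(* Every red/blue coloring of the edges of the ordered complete graph on M
   vertices contains a monochromatic copy of the ordered graph e.
   The color of the edge {x,y} with x < y is c x y. *)
Definition ramsey2_prop (N : nat) (e : rel 'I_N) (M : nat) : Prop :=
  forall c : 'I_M -> 'I_M -> bool,
    exists (f : 'I_N -> 'I_M) (b : bool),
      (forall i j : 'I_N, i < j -> f i < f j) /\
      (forall i j : 'I_N, i < j -> e i j -> c (f i) (f j) = b).

(* Main.v *)
Require Import Defs.
From mathcomp Require Import all_boot.
From mathcomp Require Import zify.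

Lemma conn_inv (T : finType) (e : rel T) (phi : T -> bool) :
  (forall u v, e u v -> phi u = phi v) ->
  forall u v, connect e u v -> phi u = phi v.
Proof.
move=> H u v /connectP [p]; elim: p u => [|w p IH] u /=; first by move=> _ ->.
by move=> /andP[euw pw] Ev; rewrite (H _ _ euw); exact: IH pw Ev.
Qed.

Arguments conn_inv {T e phi} _ {u v}.

Lemma mono_gap (N M : nat) (f : 'I_N -> 'I_M) :
  (forall i j : 'I_N, i < j -> f i < f j) ->
  forall d (i j : 'I_N), (j : nat) = i + d -> (f i : nat) + d <= f j.
Proof.
move=> Hf; elim=> [|d IH] i j Hj.
  by rewrite addn0 in Hj; rewrite addn0 (val_inj Hj).
have lt : i + d < N by have := ltn_ord j; lia.
have := IH i (Ordinal lt) erefl.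
have := Hf (Ordinal lt) j; rewrite /= Hj => H1 H2.
have := H1 ltac:(lia); lia.
Qed.

Arguments mono_gap {N M f}.

Lemma blk_step a b r : 0 < r -> a + r <= b -> a %/ r < b %/ r.
Proof.
move=> r0 h; have := leq_div2r r h; rewrite divnDr ?dvdnn // divnn r0 addn1.
by [].
Qed.

Lemma par_step p q : p < q -> odd p = odd q -> p.+2 <= q.
Proof.
move=> h1 h2; case: (ltngtP p.+1 q) => //; first by lia.
by move=> E; rewrite -E /= in h2; case: (odd p) h2.
Qed.

Lemma addIx x y c : x (+) c = y (+) c -> x = y.
Proof. by case: c; case: x; case: y. Qed.

Lemma final (r M a0 a1 a2 a3 : nat) : 0 < r -> M <= 4 * r -> a3 < M ->
  a0 + r <= a1 -> a1 < a2 -> a2 + r <= a3 ->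
  odd (a0 %/ r) = odd (a1 %/ r) -> odd (a2 %/ r) = odd (a3 %/ r) -> False.
Proof.
move=> r0 hM h3 h01 h12 h23 E01 E23.
have b1 := blk_step _ _ _ r0 h01.
have b3 := blk_step _ _ _ r0 h23.
have p1 := par_step _ _ b1 E01.
have p3 := par_step _ _ b3 E23.
have m12 := leq_div2r r (ltnW h12).
have : 4 <= a3 %/ r by move: p1 m12 p3; generalize (a0 %/ r) (a1 %/ r) (a2 %/ r) (a3 %/ r); clear; lia.
by rewrite leq_divRL //; lia.
Qed.

Theorem theorem1 (N m n : nat) (e : rel 'I_N)
  (e_sym : symmetric e) (e_irr : irreflexive e)
  (G2 : ichromatic2 e) (Gst : stitched2 e)
  (Hparts : interval_2col e m) (HN : N = m + n) :
  forall M : nat, ramsey2_prop e M -> 4 * (minn m n - 1) + 1 <= M.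
Proof.
move=> M HM.
case: Gst => k [[/andP[k0 kN] Hk] Hcon].
case: Hparts => /andP[m0 mN] Hm.
have o0 : 0 < N by lia.
have o1 : k.-1 < N by lia.
have o3 : N.-1 < N by lia.
pose i0 := Ordinal o0; pose i1 := Ordinal o1; pose i2 := Ordinal kN;
pose i3 := Ordinal o3.
have C : forall u v : 'I_N, val u \in [:: 0; k.-1; k; N.-1] ->
    val v \in [:: 0; k.-1; k; N.-1] -> connect e u v := Hcon.
have mem0 : val i0 \in [:: 0; k.-1; k; N.-1] by rewrite !inE eqxx.
have mem1 : val i1 \in [:: 0; k.-1; k; N.-1] by rewrite !inE eqxx ?orbT.
have mem2 : val i2 \in [:: 0; k.-1; k; N.-1] by rewrite !inE eqxx ?orbT.
have mem3 : val i3 \in [:: 0; k.-1; k; N.-1] by rewrite !inE eqxx ?orbT.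
have km : k = m.
  pose psi := fun i : 'I_N => (i < k) (+) (i < m).
  have Hp : forall u v, e u v -> psi u = psi v.
    move=> u v euv.
    have h1 : (u < k) != (v < k) by apply/negP => /eqP; exact: Hk u v euv.
    have h2 : (u < m) != (v < m) by apply/negP => /eqP; exact: Hm u v euv.
    rewrite /psi; move: h1 h2.
    by case: (u < k); case: (v < k); case: (u < m); case: (v < m).
  have E01 := conn_inv Hp (C i0 i1 mem0 mem1).
  have E02 := conn_inv Hp (C i0 i2 mem0 mem2).
  move: E01 E02; rewrite /psi /= k0 m0 /=.
  case: (ltngtP k m) => h //.
  - by rewrite ltnn.
  - have -> : k.-1 < k by lia.
    by have -> : k.-1 < m = false by apply/negbTE; lia.
subst k.
set r := minn m n - 1.
rewrite leqNgt; apply/negP => HMr.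
have [r0 | rpos] := posnP r.
  have M0 : M = 0 by lia.
  subst M.
  have [f _] := HM (fun _ _ => true).
  by case: (f i0).
pose c := fun x y : 'I_M => odd (x %/ r + y %/ r).
have [f [b [Hf Hc]]] := HM c.
pose phi := fun i : 'I_N => odd (f i %/ r) (+) ((i < m) && b).
have Hp : forall u v, e u v -> phi u = phi v.
  move=> u v euv.
  have h2 : (u < m) != (v < m) by apply/negP => /eqP; exact: Hm u v euv.
  have hc : odd (f u %/ r) (+) odd (f v %/ r) = b.
    rewrite -oddD.
    case: (ltngtP u v) => h.
    - exact: Hc u v h euv.
    - by rewrite addnC; apply: (Hc v u h); rewrite e_sym.
    - by move: euv; rewrite (val_inj h) e_irr.
  rewrite /phi; move: h2 hc.
  by case: (u < m); case: (v < m); case: (b); case: (odd (f u %/ r)); case: (odd (f v %/ r)).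
have E01 := conn_inv Hp (C i0 i1 mem0 mem1).
have E23 := conn_inv Hp (C i2 i3 mem2 mem3).
have s1 : (i1 < m) = (i0 < m) by rewrite /= m0; lia.
have s3 : (i3 < m) = (i2 < m) by rewrite /=; lia.
move: E01 E23; rewrite /phi s1 s3 => /addIx E01 /addIx E23.
have n0 : 0 < n by move: mN; rewrite HN; clear; lia.
have g1 := mono_gap Hf m.-1 i0 i1 erefl.
have g2 := mono_gap Hf n.-1 i2 i3 ltac:(rewrite /= HN; clear -n0; lia).
have g12 := Hf i1 i2 ltac:(rewrite /=; clear -m0; lia).
have rm : r <= m.-1 by rewrite /r; clear; lia.
have rn : r <= n.-1 by rewrite /r; clear; lia.
have M4 : M <= 4 * r by move: HMr; clear; lia.
apply: (final _ _ _ _ _ _ rpos M4 (ltn_ord (f i3)) _ g12 _ E01 E23).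
  by move: g1 rm; clear; lia.
by move: g2 rn; clear; lia.
Qed.
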